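(* Let $p$ be a prime. Then $\mathcal{M}_p\subseteq\{1,2,6,42,1806\}\cup p\cdot\mathcal{W}$.
   Context: For positive integers $k,n$ let $S_k(n)=\sum_{i=1}^{n} i^k$. For an integer $a$, $\mathcal{M}_a$ denotes the set of positive integers $n$ such that $S_n(n)\equiv a\pmod{n}$. A positive integer $n$ is a weak primary pseudoperfect number if $\sum_{q\mid n,\ q\text{ prime}} \frac{n}{q}+1\equiv 0\pmod{n}$; $\mathcal{W}$ denotes the set of weak primary pseudoperfect numbers. For a set $A$ and integer $c$, $c\cdot A=\{ca: a\in A\}$. *)

(* Defs.v *)
From mathcomp Require Import all_boot.
Set Implicit Arguments.
Unset Strict Implicit.
Unset Printing Implicit Defensive.

Definition S (k n : nat) : nat := \sum_(1 <= i < n.+1) i ^ k.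

Definition inM (a n : nat) : Prop := 0 < n /\ S n n = a %[mod n].

Definition weak_primary_pseudoperfect (n : nat) : Prop :=
  0 < n /\ (\sum_(q <- primes n) n %/ q) + 1 = 0 %[mod n].

(* Main.v *)
Require Import Defs.
From mathcomp Require Import all_boot all_algebra all_field.
From mathcomp Require Import ring zify.
Set Implicit Arguments. Unset Strict Implicit. Unset Printing Implicit Defensive.

Section FpPart.
Import GRing.Theory.
Local Open Scope ring_scope.

Lemma Fp_fermat (r : nat) (x : 'F_r) : prime r -> x != 0 -> x ^+ r.-1 = 1.
Proof.
move=> pr nz; apply: (mulIf nz); rewrite mul1r -exprSr prednK ?prime_gt0 //.
by have := expf_card x; rewrite card_Fp.
Qed.

Lemma sumpowF (r n : nat) : prime r -> (0 < n)%N ->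
  \sum_(x : 'F_r) x ^+ n = if (r.-1 %| n)%N then -1 else 0.
Proof.
move=> pr n0.
have cnz : #|[pred i : 'F_r | i != 0]| = r.-1.
  have := cardC1 (0 : 'F_r); rewrite card_Fp // => <-.
case: ifP => hd.
  rewrite (bigD1 0) //= expr0n eqn0Ngt n0 /= add0r.
  rewrite (eq_bigr (fun _ => 1)); last first.
    move=> x nz; case/dvdnP: hd => k ->; by rewrite mulnC exprM Fp_fermat // expr1n.
  rewrite sumr_const cnz.
  apply/eqP; rewrite -subr_eq0 opprK -mulrSr prednK ?prime_gt0 //.
  by rewrite pchar_Fp_0.
set rs := enum [pred x : 'F_r | x != 0].
have : has (r.-1).-primitive_root rs.
  apply: cyclic.has_prim_root.
  - by rewrite -ltnS prednK ?prime_gt0 // prime_gt1.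
  - by apply/allP => x; rewrite mem_enum inE => nz; rewrite unity_rootE Fp_fermat.
  - exact: enum_uniq.
  - by rewrite -cardE cnz.
case/hasP => z; rewrite mem_enum inE => znz zpr.
have zn : z ^+ n != 1 by rewrite -(prim_order_dvd zpr) hd.
have : (z ^+ n - 1) * \sum_(x : 'F_r) x ^+ n = 0.
  have E : \sum_(x : 'F_r) x ^+ n = \sum_(x : 'F_r) (z * x) ^+ n.
    exact: (reindex_inj (mulfI znz)).
  rewrite mulrBl mul1r mulr_sumr E.
  by rewrite -sumrB big1 // => x _; rewrite exprMn subrr.
by move/eqP; rewrite mulf_eq0 subr_eq0 (negbTE zn) /= => /eqP.
Qed.

Lemma big_nat_eqb (R : Type) (idx : R) (op : R -> R -> R) (N M : nat) (F : nat -> R) :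
  N = M -> \big[op/idx]_(0 <= i < N) F i = \big[op/idx]_(0 <= i < M) F i.
Proof. by move->. Qed.

Lemma sumpow_mod (r n : nat) : prime r -> (0 < n)%N ->
  ((\sum_(j < r) j ^ n) %% r = if r.-1 %| n then r.-1 else 0)%N.
Proof.
move=> pr n0.
have H : ((\sum_(j < r) j ^ n)%:R : 'F_r) = \sum_(x : 'F_r) x ^+ n.
  rewrite natr_sum.
  rewrite -(big_mkord xpredT (fun j => ((j ^ n)%:R : 'F_r))).
  rewrite (eq_bigr (fun x : 'F_r => ((nat_of_ord x)%:R : 'F_r) ^+ n)); last first.
    by move=> x _; rewrite natr_Zp.
  rewrite -(big_mkord xpredT (fun j => ((j%:R : 'F_r) ^+ n))).
  set g := (fun j => ((j%:R : 'F_r) ^+ n)).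
  rewrite (big_nat_eqb _ _ g (Fp_cast pr)).
  by apply: eq_bigr => i _; rewrite natrX.
have H2 : ((\sum_(j < r) j ^ n)%:R : 'F_r) = (if r.-1 %| n then r.-1 else 0)%N%:R.
  rewrite H sumpowF //; case: ifP => // _.
  apply/eqP; rewrite eq_sym -subr_eq0 opprK -mulrSr prednK ?prime_gt0 //.
  by rewrite pchar_Fp_0.
have := congr1 (@nat_of_ord _) H2; rewrite !val_Fp_nat // => ->.
by case: ifP => _; rewrite ?mod0n // modn_small // prednK ?prime_gt0.
Qed.

End FpPart.


Lemma sum_congr_mod (I : Type) (r : seq I) (P : pred I) (F G : I -> nat) d :
  (forall i, F i = G i %[mod d]) ->
  \sum_(i <- r | P i) F i = \sum_(i <- r | P i) G i %[mod d].
Proof.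
move=> H; rewrite -modn_summ -[in RHS]modn_summ; congr (_ %% _).
by apply: eq_bigr => i _; rewrite H.
Qed.

Lemma periodic_sum (f : nat -> nat) d M k :
  (forall i, f (i + d) = f i %[mod M]) ->
  \sum_(0 <= i < k * d) f i = k * \sum_(0 <= i < d) f i %[mod M].
Proof.
move=> H; elim: k => [|k IH]; first by rewrite mul0n big_geq.
rewrite mulSn (big_cat_nat (leq0n d) (leq_addr _ _)) /=.
have -> : \sum_(d <= i < d + k * d) f i = \sum_(0 <= i < k * d) f (i + d).
  by rewrite -{1}[d]add0n big_addn addKn.
rewrite -modnDmr (sum_congr_mod _ _ H) IH modnDmr.
by rewrite mulSn.
Qed.

Lemma binom_p2 (j p n : nat) : p %| n -> (j + p) ^ n = j ^ n %[mod p ^ 2].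
Proof.
have key : forall k, (j + p) ^ k.+1 = j ^ k.+1 + k.+1 * p * j ^ k %[mod p ^ 2].
  elim=> [|k IH]; first by rewrite expn1 expn0 muln1 mul1n.
  rewrite expnS -modnMmr IH modnMmr.
  have -> : (j + p) * (j ^ k.+1 + k.+1 * p * j ^ k) =
            p ^ 2 * (k.+1 * j ^ k) + (j ^ k.+2 + k.+2 * p * j ^ k.+1).
    rewrite !expnS; set x := j ^ k; ring.
  by rewrite mulnC modnMDl.
case: n => [|k] hd; first by [].
rewrite key; case/dvdnP: hd => t ht.
have -> : k.+1 * p * j ^ k = (t * j ^ k) * p ^ 2 by rewrite ht; ring.
by rewrite addnC modnMDl.
Qed.

Lemma blocks (n d : nat) : 0 < n -> d %| n ->
  Defs.S n n = (n %/ d) * \sum_(0 <= j < d) j ^ n %[mod d].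
Proof.
move=> n0 hd; rewrite /S.
have E : \sum_(1 <= i < n.+1) i ^ n = \sum_(0 <= i < n) i ^ n + n ^ n.
  by rewrite big_nat_recr //= (big_ltn n0) exp0n.
have H : forall i, (i + d) ^ n = i ^ n %[mod d].
  by move=> i; rewrite -modnXm modnDr modnXm.
have P := @periodic_sum (fun i => i ^ n) d d (n %/ d) H.
rewrite divnK // in P.
rewrite E -modnDm.
have -> : n ^ n %% d = 0.
  by apply/eqP; apply: dvdn_exp.
by rewrite addn0 modn_mod P.
Qed.

Definition goodset := [:: 1; 2; 6; 42; 1806].

Lemma goodset_step : all (fun m => all (fun P => if (P.-1 %| m) && prime P && ~~ (P %| m) then P * m \in goodset else true) (iota 0 m.+2)) goodset.
Proof. by vm_compute. Qed.

Lemma sqf_good n : 0 < n ->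
  (forall r, prime r -> r %| n -> ~~ (r * r %| n) /\ (r.-1 %| n)) -> n \in goodset.
Proof.
elim/ltn_ind: n => n IH n0 Hn.
case: (ltngtP n 1) => [|n1|->]; [by case: n n0 {IH Hn} => [|[]] | |done].
set P := max_pdiv n.
have pP : prime P := max_pdiv_prime n1.
have dP : P %| n := max_pdiv_dvd n.
set m := n %/ P.
have nE : n = P * m by rewrite /m mulnC divnK.
have Pmax : forall r, prime r -> r %| n -> r <= P.
  by move=> r pr rn; apply: max_pdiv_max; rewrite mem_primes pr n0 rn.
clearbody m P.
have P1 : 1 < P := prime_gt1 pP.
have m0 : 0 < m by move: n0; rewrite nE; case: (m) => //; rewrite muln0.
have nPm : ~~ (P %| m).
  apply/negP => hm; have [H1 _] := Hn P pP dP; move/negP: H1; apply.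
  by rewrite nE dvdn_pmul2l // prime_gt0.
have mlt : m < n by rewrite nE; nia.
have hcop : forall x, 0 < x < P -> x %| n -> x %| m.
  move=> x /andP [x0 xP] h.
  have c : coprime x P.
    rewrite coprime_sym prime_coprime //.
    by apply/negP => /(dvdn_leq x0); rewrite leqNgt xP.
  by move: h; rewrite nE (Gauss_dvdr _ c).
have Hm : m \in goodset.
  apply: IH => // r pr rm.
  have rn : r %| n by rewrite nE dvdn_mull.
  have [H1 H2] := Hn r pr rn.
  split.
    apply/negP => h; move/negP: H1; apply; rewrite nE; exact: dvdn_mull.
  apply: hcop => //.
  have rP : r <= P := Pmax r pr rn.
  have rneP : r != P by apply/eqP => e; move: nPm; rewrite -e rm.
  have rltP : r < P by rewrite ltn_neqAle rneP rP.
  apply/andP; split; first by rewrite -ltnS prednK ?prime_gt0 // prime_gt1.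
  exact: leq_ltn_trans (leq_pred r) rltP.
have HPm : P.-1 %| m.
  apply: hcop; last exact: (Hn P pP dP).2.
  apply/andP; split; last by rewrite ltn_predL prime_gt0.
  by rewrite -ltnS prednK ?prime_gt0 // prime_gt1.
have := allP goodset_step m Hm => /allP /(_ P).
rewrite mem_iota add0n ltnS.
have := dvdn_leq m0 HPm => hle.
rewrite (_ : P <= m.+1); last by rewrite -[P](prednK (prime_gt0 pP)) ltnS.
by rewrite HPm pP nPm nE => /(_ isT).
Qed.


Lemma dvd_modeq r x y : x %% r = y %% r -> (r %| x) = (r %| y).
Proof. by rewrite /dvdn => ->. Qed.

Lemma sumpow_mod' (r n : nat) : prime r -> 0 < n ->
  (\sum_(0 <= j < r) j ^ n) %% r = if r.-1 %| n then r.-1 else 0.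
Proof. by move=> pr n0; rewrite big_mkord sumpow_mod. Qed.

Lemma core r n a T c : prime r -> T %% r = (if r.-1 %| n then r.-1 else 0) ->
  a * T = c %[mod r] -> ~~ (r %| c) -> [/\ r.-1 %| n, ~~ (r %| a) & r %| a + c].
Proof.
move=> pr hT hac hc.
have E : c %% r = (a * (if r.-1 %| n then r.-1 else 0)) %% r by rewrite -hac -modnMmr hT.
move: hT E; case: ifP => hd hT E.
  split => //.
    apply/negP => ha; move/negP: hc; apply; rewrite (dvd_modeq E).
    exact: dvdn_mulr.
  rewrite /dvdn -modnDmr E modnDmr -{1}(muln1 a) -mulnDr add1n prednK ?prime_gt0 //.
  by rewrite modnMl.
by move: hc; rewrite (dvd_modeq E) muln0 dvdn0.
Qed.

Lemma step1 p n r : prime p -> 0 < n -> Defs.S n n = p %[mod n] -> prime r -> r %| n -> r != p ->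
  [/\ ~~ (r * r %| n), r.-1 %| n & r %| n %/ r + p].
Proof.
move=> pp n0 hS pr rn rp.
have hSr : Defs.S n n = p %[mod r] by rewrite -(modn_dvdm _ rn) hS modn_dvdm.
have hb := blocks n0 rn.
have [h1 h2 h3] := core pr (sumpow_mod' pr n0) (etrans (esym hb) hSr)
   (negbT (etrans (dvdn_prime2 pr pp) (negbTE rp))).
split => //.
apply/negP => h; move/negP: h2; apply.
by rewrite -(dvdn_pmul2r (prime_gt0 pr)) divnK.
Qed.

Lemma step2 p n : prime p -> 0 < n -> Defs.S n n = p %[mod n] -> p * p %| n ->
  ~~ (p %| n %/ (p * p)) /\ p %| n %/ (p * p) + 1.
Proof.
move=> pp n0 hS hpp.
have pn : p %| n := dvdn_trans (dvdn_mulr _ (dvdnn p)) hpp.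
have hSr : Defs.S n n = p %[mod p * p] by rewrite -(modn_dvdm _ hpp) hS modn_dvdm.
have hb := blocks n0 hpp.
have hper := @periodic_sum (fun i => i ^ n) p (p ^ 2) p (fun j => binom_p2 j pn).
rewrite -mulnn in hper.
set a := n %/ (p * p) in hb *.
set T := \sum_(0 <= j < p) j ^ n in hper.
have E : p * (a * T) = p * 1 %[mod p * p].
  by rewrite muln1 -hSr hb -[in RHS]modnMmr hper modnMmr mulnCA.
have E2 : a * T = 1 %[mod p].
  apply/eqP; rewrite -(eqn_pmul2l (prime_gt0 pp)) !muln_modr.
  by rewrite E.
have np1 : ~~ (p %| 1) by rewrite dvdn1; case: eqP pp => // ->.
by have [_ h2 h3] := core pp (sumpow_mod' pp n0) E2 np1.
Qed.

Theorem mainTheorem13 (p : nat) (hp : prime p) (n : nat) :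
  inM p n ->
  n \in [:: 1; 2; 6; 42; 1806] \/
  exists m, weak_primary_pseudoperfect m /\ n = p * m.
Proof.
rewrite /inM => -[n0 hS].
case pn: (p %| n); last first.
  left; apply: (sqf_good n0) => r pr rn.
  have rp : r != p by apply/eqP => e; rewrite -e rn in pn.
  by have [h1 h2 _] := step1 hp n0 hS pr rn rp.
right; exists (n %/ p).
set m := n %/ p.
have nE : n = p * m by rewrite /m mulnC divnK.
split=> //.
have p0 := prime_gt0 hp.
have m0 : 0 < m by move: n0; rewrite nE muln_gt0 => /andP[].
clearbody m.
have hp2 : p %| m -> ~~ (p %| m %/ p) /\ p %| m %/ p + 1.
  move=> pm; have hpp : p * p %| n by rewrite nE dvdn_pmul2l.
  by have := step2 hp n0 hS hpp; rewrite nE divnMl.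
have sqf : forall r, prime r -> r %| m -> ~~ (r * r %| m).
  move=> r pr rm; case: (eqVneq r p) => [e|rp].
    rewrite e in rm *; have [h _] := hp2 rm.
    apply/negP => h'; move/negP: h; apply.
    by rewrite -(dvdn_pmul2r p0) divnK.
  have rn : r %| n by rewrite nE dvdn_mull.
  have [h1 _ _] := step1 hp n0 hS pr rn rp.
  apply/negP => h; move/negP: h1; apply; rewrite nE; exact: dvdn_mull.
have hr : forall r, prime r -> r %| m -> r %| m %/ r + 1.
  move=> r pr rm; case: (eqVneq r p) => [e|rp].
    by rewrite e in rm *; have [_ h] := hp2 rm.
  have rn : r %| n by rewrite nE dvdn_mull.
  have [_ _ h3] := step1 hp n0 hS pr rn rp.
  have crp : coprime r p by rewrite prime_coprime // dvdn_prime2 // (negbTE rp).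
  move: h3; rewrite nE -muln_divA // -{2}(muln1 p) -mulnDr.
  by rewrite Gauss_dvdr.
split=> //.
rewrite mod0n; apply/eqP.
change (m %| \sum_(q <- primes m) m %/ q + 1).
apply/(dvdn_partP _ m0) => r; rewrite mem_primes => /and3P [pr _ rm].
have l1 : 1 <= logn r m by rewrite -pfactor_dvdn // expn1.
have l2 : logn r m < 2 by rewrite ltnNge -pfactor_dvdn // -mulnn sqf.
rewrite p_part.
have -> : logn r m = 1 by apply/eqP; rewrite eqn_leq l1 andbT -ltnS.
rewrite expn1 (bigD1_seq r) ?mem_primes ?pr ?m0 ?rm ?primes_uniq //=.
rewrite -addnA (addnC (\sum_(i <- _ | _) _)) addnA dvdn_addl; first exact: hr.
rewrite big_seq_cond; apply: dvdn_sum => q /andP [qm qr].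
move: qm; rewrite mem_primes => /and3P [pq _ qdm].
have cop : coprime r q by rewrite prime_coprime // dvdn_prime2 // eq_sym (negbTE qr).
by move: rm; rewrite -{1}(divnK qdm) Gauss_dvdl.
Qed.
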